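(* If $G$ is a (finite, loopless) multigraph and $v\in V(G)$, then \[\sum_{u\in N(v)}\frac{\mu(uv)}{d(v) + \mu(uv)} \leq \frac{|N(v)|}{1 + |N(v)|}.\]
   Context: $N(v)$ is the set of vertices adjacent to $v$, $\mu(uv)$ is the number of edges of $G$ incident to both $u$ and $v$, and $d(v)=\sum_{u\in N(v)}\mu(uv)$. *)

(* Defs.v *)
From mathcomp Require Import all_boot all_order all_algebra.
Set Implicit Arguments. Unset Strict Implicit. Unset Printing Implicit Defensive.

(* A finite loopless multigraph on vertex set V (a finType), given by its
   edge-multiplicity function mu : mu u v = number of edges joining u and v. *)
Record multigraph (V : finType) := Multigraph {
  mu : V -> V -> nat;
  mu_sym : forall u v, mu u v = mu v u;
  mu_loopless : forall v, mu v v = 0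
}.

Definition nbhd (V : finType) (G : multigraph V) (v : V) : {set V} :=
  [set u | 0 < mu G u v].

Definition deg (V : finType) (G : multigraph V) (v : V) : nat :=
  \sum_(u in nbhd G v) mu G u v.

(* Main.v *)
Require Import Defs.
From mathcomp Require Import all_boot all_order all_algebra.
From mathcomp Require Import ring lra.
Import Order.TTheory GRing.Theory Num.Theory.
Local Open Scope ring_scope.

Lemma term_bound (m d n : rat) : 0 <= m -> 0 < n -> 0 < d ->
  m / (d + m) <= 1/(n+1) + (n^+2 / (d * (n+1)^+2)) * m - n / (n+1)^+2.
Proof.
move=> m0 n0 d0.
rewrite -subr_ge0.
have -> : 1/(n+1) + (n^+2 / (d * (n+1)^+2)) * m - n / (n+1)^+2 - m / (d + m)
   = (n * m - d)^+2 / (d * (d+m) * (n+1)^+2).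
  field.
  by rewrite !lt0r_neq0 //; lra.
apply: divr_ge0; first exact: sqr_ge0.
apply: mulr_ge0; last exact: sqr_ge0.
apply: mulr_ge0; lra.
Qed.

Theorem lemma6p5 (V : finType) (G : multigraph V) (v : V) :
  \sum_(u in nbhd G v)
      ((mu G u v)%:R / ((deg G v)%:R + (mu G u v)%:R) : rat)
  <= (#|nbhd G v|)%:R / (1 + (#|nbhd G v|)%:R).
Proof.
set N := nbhd G v.
have [N0|Npos] := posnP #|N|.
  rewrite N0 big1 ?mul0r //.
  by move=> u uN; move/eqP: N0; rewrite cards_eq0 => /eqP E; rewrite E inE in uN.
have dpos : (0 < deg G v)%N.
  move/card_gt0P: Npos => [u uN].
  rewrite /deg (bigD1 u) //=; move: uN; rewrite inE => h.
  by rewrite (leq_trans h) ?leq_addr.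
set n : rat := (#|N|)%:R. set d : rat := (deg G v)%:R.
have n0 : 0 < n by rewrite ltr0n.
have d0 : 0 < d by rewrite ltr0n.
have H := @ler_sum _ _ (index_enum V) (fun u => u \in N) _ _ (fun u (_ : u \in N) => @term_bound ((mu G u v)%:R) d n (ler0n _ _) n0 d0).
apply: (le_trans H).
rewrite big_split /= big_split /= sumrN -(mulr_sumr _ _ _ (n ^+ 2 / (d * (n + 1) ^+ 2))).
have -> : \sum_(i in N) ((mu G i v)%:R : rat) = d by rewrite /d /deg natr_sum.
rewrite (sumr_const (mem N) (1/(n+1))) (sumr_const (mem N) (n/(n+1)^+2)) -(mulr_natl (1/(n+1))) -(mulr_natl (n/(n+1)^+2)) -/n.
rewrite le_eqVlt; apply/orP; left; apply/eqP.
field.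
by rewrite !lt0r_neq0 //; lra.
Qed.
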